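(* Let $g\ge1$ and $n\ge1$. For any $T\in\mathcal T_n$ there exists $\widehat T\in\mathcal T_n$ such that for every segment $[t,t')$ of $T$ (with $1\le t<t'\le n+1$): (i) $\hat w_n(\widehat T)>0$, $t$ and $t'$ are switch points of $\widehat T$ (where $t'=n+1$ is considered a switch point), and $\widehat T$ contains at most $l=\left\lceil\frac{\log(t'-t)}{\lfloor\log(g+1)\rfloor}\right\rceil+1$ segments in $[t,t')$; (ii) if the switch points of $\widehat T$ in $[t,t')$ are $t_1:=t<t_2<\cdots<t_{l'}$ and $t_{l'+1}:=t'$, then $l'\le l$, and for every nondecreasing function $f:[0,\infty)\to[0,\infty)$, \[ \sum_{i=1}^{l'}f(t_{i+1}-t_i)\le\sum_{i=0}^{l'-2}f\!\left(\frac{t'-t}{2^{i\lfloor\log(g+1)\rfloor}}\right)+f(t'-t) \le\int_0^{\frac{\log(t'-t)}{\lfloor\log(g+1)\rfloor}}f\!\left(\frac{t'-t}{2^{x\lfloor\log(g+1)\rfloor}}\right)dx+2f(t'-t), \] where the first sum on the right is empty if $l'=1$.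
   Context: $\log$ is base 2. $\mathcal T_n$ is the set of transition paths $T=(t_1,\ldots,t_C;n)$ with $C\ge0$ and $1<t_1<\cdots<t_C\le n$; with $t_0=1$, $t_{C+1}=n+1$, the segments of $T$ are $[t_c,t_{c+1})$, $c=0,\ldots,C$, and its switch points are $t_1,\ldots,t_C$. Weights: given switch probabilities $p(t|t')\in(0,1)$ for all $1\le t'<t$, let $U_1=1$ and $\Pr(U_t=t\mid U_{t-1}=t')=p(t|t')=1-\Pr(U_t=t'\mid U_{t-1}=t')$ define a Markov chain; a path $T\in\mathcal T_t$ corresponds to the realization jumping exactly at its switch points and $w_t(T)$ is its probability. Pruning with parameter $g$: write $s=o2^u$ with $o$ odd, $u\ge0$; $h_t(s)=1$ if $s\le t<s+g2^u$ and $0$ otherwise; $\hat p(t|t')=1-h_t(t')(1-p(t|t'))$; $\hat w_t$ is the Markov weight function defined from $\hat p$. *)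

(* Defs.v *)
From HB Require Import structures.
From mathcomp Require Import all_boot all_order all_algebra.
From mathcomp Require Import all_classical all_reals all_analysis.
Set Implicit Arguments. Unset Strict Implicit. Unset Printing Implicit Defensive.
Import Order.TTheory GRing.Theory Num.Theory.
Local Open Scope ring_scope.

Definition log2 {R : realType} (x : R) : R := ln x / ln 2.

(* A transition path T = (t_1,...,t_C; n) is the list [:: t_1; ...; t_C]
   of its switch points; it lies in T_n iff 1 < t_1 < ... < t_C <= n. *)
Definition is_tpath (n : nat) (T : seq nat) : bool :=
  sorted ltn T && all (fun x => (1 < x <= n)%N) T.

Definition bnd (n : nat) (T : seq nat) : seq nat := 1%N :: T ++ [:: n.+1].

Definition segments (n : nat) (T : seq nat) : seq (nat * nat) :=
  zip (bnd n T) (behead (bnd n T)).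

(* value of the chain U_{s-1} along the path T: last jump strictly before s
   (or 1 if none) *)
Definition last_switch (T : seq nat) (s : nat) : nat :=
  foldl maxn 1%N [seq x <- T | (x < s)%N].

(* Markov weight w_t(T): probability that the chain with switch
   probabilities q (q t t' = Pr(U_t = t | U_{t-1} = t')) jumps exactly at the
   switch points of T during steps 2..t. *)
Definition w {R : realType} (q : nat -> nat -> R) (t : nat) (T : seq nat) : R :=
  \prod_(2 <= s < t.+1)
     (if s \in T then q s (last_switch T s) else 1 - q s (last_switch T s)).

Definition h (g t s : nat) : bool :=
  let u := logn 2 s in (s <= t < s + g * 2 ^ u)%N.

Definition phat {R : realType} (g : nat) (p : nat -> nat -> R) (t t' : nat) : R :=
  1 - (h g t t')%:R * (1 - p t t').

Definition pts_in (n : nat) (Th : seq nat) (t t' : nat) : seq nat :=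
  [seq s <- bnd n Th | (t <= s < t')%N].

(* Main.v *)
Require Import Defs.
From HB Require Import structures.
From mathcomp Require Import all_boot all_order all_algebra.
From mathcomp Require Import all_classical all_reals all_analysis.
From mathcomp Require Import measurable_realfun.
From mathcomp Require Import zify lra.
Import Order.TTheory GRing.Theory Num.Theory.
Set Implicit Arguments. Unset Strict Implicit.

Definition nxt (kn s : nat) : nat := ((s %/ 2^(logn 2 s + kn)).+1 * 2^(logn 2 s + kn))%N.

Lemma nxt_props (g kn s : nat) : (0 < kn)%N -> (2^kn <= g.+1)%N -> (0 < s)%N ->
  [/\ (s < nxt kn s)%N, (nxt kn s <= s + g * 2 ^ logn 2 s)%N &
      (logn 2 s + kn <= logn 2 (nxt kn s))%N].
Proof.
move=> kn0 Kg s0.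
set u := logn 2 s.
have P0 : (0 < 2 ^ u)%N by rewrite expn_gt0.
have K0 : (0 < 2 ^ kn)%N by rewrite expn_gt0.
have [ov so] : exists ov, s = (2 ^ u * ov)%N.
  by exists (s %/ 2^u); rewrite mulnC divnK // pfactor_dvdnn.
have oodd : ~~ (2 %| ov).
  apply/negP => /dvdnP [m om].
  have : (2 ^ u.+1 %| s)%N by rewrite so om expnS; apply/dvdnP; exists m; nia.
  by rewrite pfactor_dvdn // ltnn.
have r0 : (0 < ov %% 2 ^ kn)%N.
  rewrite lt0n; apply: contra oodd => H; apply: dvdn_trans H.
  by case: kn kn0 {K0 Kg} => // kn' _; rewrite expnS dvdn_mulr.
have rK : (ov %% 2 ^ kn < 2 ^ kn)%N by rewrite ltn_mod.
have eo := divn_eq ov (2 ^ kn).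
have E : (s %/ 2 ^ (u + kn) = ov %/ 2 ^ kn)%N by rewrite so expnD divnMl.
have nE : nxt kn s = ((ov %/ 2 ^ kn).+1 * (2 ^ u * 2 ^ kn))%N by rewrite /nxt -/u E expnD.
have Hd : (2 ^ (u + kn) %| nxt kn s)%N by rewrite nE expnD dvdn_mull.
have n0 : (0 < nxt kn s)%N by rewrite nE !muln_gt0 P0 K0.
rewrite -pfactor_dvdn // Hd nE so.
move: eo r0 rK Kg P0 K0; set q := (ov %/ 2 ^ kn)%N; set r := (ov %% 2 ^ kn)%N.
set P := (2^u)%N. set K := (2^kn)%N. clearbody q r P K => eo r0 rK Kg P0 K0.
have h1 : (K <= r + g)%N by lia.
have := leq_mul (leqnn P) h1.
subst ov. split => //; nia.
Qed.

Fixpoint chain (g kn t' fuel s : nat) : seq nat :=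
  if fuel is f.+1 then
    (if (t' <= s + g * 2 ^ logn 2 s)%N then [:: s] else s :: chain g kn t' f (nxt kn s))
  else [:: s].

Definition Rg (g : nat) : rel nat := fun a b => (b <= a + g * 2 ^ logn 2 a)%N.

Lemma chain_props g kn t' : (0 < kn)%N -> (2^kn <= g.+1)%N -> forall fuel s,
  (0 < s)%N -> (s < t')%N -> (t' - s <= fuel)%N ->
  let c := chain g kn t' fuel s in
  [/\ c = s :: behead c, path ltn s (behead c ++ [:: t']),
      path (Rg g) s (behead c ++ [:: t']), all (fun x => s <= x < t')%N c &
      (1 < size c -> g * 2 ^ (logn 2 s + (size c).-2 * kn) < t' - s)%N].
Proof.
move=> kn0 Kg; elim=> [|f IH] s s0 st fs /=; first by lia.
case: ifP => stp.
  rewrite /= st leqnn /= /Rg stp; split => //.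
have [h1 h2 h3] := nxt_props kn0 Kg s0.
have h2' : (nxt kn s - s <= g * 2 ^ logn 2 s)%N by lia.
have st' : (nxt kn s < t')%N by move/negbT: stp; rewrite -ltnNge; lia.
have [IH1 IH2 IH3 IH4 IH5] := IH (nxt kn s) (ltn_trans s0 h1) st' ltac:(lia).
set c := chain g kn t' f (nxt kn s) in IH1 IH2 IH3 IH4 IH5 *.
split => //.
- by rewrite /= IH1 /= h1.
- by rewrite /= IH1 /= {1}/Rg h2.
- rewrite /= leqnn st /=; apply/allP => x /(allP IH4); lia.
- rewrite /=; case: (size c) IH5 => [|[|m]] //= IH5 _.
    by rewrite mul0n addn0; move/negbT: stp; rewrite -ltnNge; lia.
  have := IH5 isT.
  have : (2 ^ (logn 2 s + m.+1 * kn) <= 2 ^ (logn 2 (nxt kn s) + m * kn))%N.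
    by rewrite leq_exp2l //; lia.
  move=> H1 H2; have := leq_mul (leqnn g) H1; lia.
Qed.

Fixpoint build (g kn : nat) (B : seq nat) : seq nat :=
  match B with
  | b :: ((b' :: _) as rest) => chain g kn b' b' b ++ build g kn rest
  | _ => [::]
  end.

Lemma filter_nil (T : Type) (a : pred T) (s : seq T) :
  all (fun x => ~~ a x) s -> [seq x <- s | a x] = [::].
Proof. by elim: s => //= x s IH /andP[/negbTE -> /IH]. Qed.

Lemma in_zip2 (s1 s2 : seq nat) t t' : (t, t') \in zip s1 s2 -> (t \in s1) /\ (t' \in s2).
Proof.
elim: s1 s2 => [|x s1 IH] [|y s2] //=; rewrite inE => /orP[/eqP [-> ->]|/IH [h1 h2]].
  by rewrite !inE !eqxx.
by rewrite !inE h1 h2 !orbT.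
Qed.

Lemma build_props g kn : (0 < kn)%N -> (2^kn <= g.+1)%N -> forall rest b,
  (0 < b)%N -> path ltn b rest ->
  let Y := build g kn (b :: rest) ++ [:: last b rest] in
  exists Y', [/\ Y = b :: Y', path ltn b Y', path (Rg g) b Y',
    forall t t', (t, t') \in zip (b :: rest) rest ->
       [seq x <- Y | (t <= x < t')%N] = chain g kn t' t' t &
    forall t t', (t, t') \in zip (b :: rest) rest -> t' \in Y].
Proof.
move=> kn0 Kg; elim=> [|b' rest IH] b b0 /=.
  by move=> _; exists [::]; split.
move=> /andP [bb' pth].
have [Y' [E1 E2 E3 E4 E5]] := IH b' (ltn_trans b0 bb') pth.
have [C1 C2 C3 C4 _] := chain_props kn0 Kg b0 bb' (leq_subr _ _).
set c := chain g kn b' b' b in C1 C2 C3 C4 *.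
rewrite -catA E1 C1.
have Hmin : all (fun x => b' <= x)%N (b' :: Y').
  by rewrite /= leqnn /=; apply: sub_all (order_path_min ltn_trans E2) => x; apply: ltnW.
exists (behead c ++ b' :: Y'); split => //.
- by rewrite -cat_rcons cat_path -cats1 C2 last_cat /= E2.
- by rewrite -cat_rcons cat_path -cats1 C3 last_cat /= E3.
- move=> t t'; rewrite inE => /orP[/eqP [-> ->]|Hz].
    rewrite -C1 filter_cat (all_filterP C4) filter_nil ?cats0 //.
    by apply: sub_all Hmin => x h; rewrite negb_and -leqNgt h orbT.
  have [ht _] := in_zip2 Hz.
  have tb' : (b' <= t)%N.
    move: ht; rewrite inE => /orP[/eqP -> //|]; move/(allP (order_path_min ltn_trans pth)).
    exact: ltnW.
  rewrite -C1 filter_cat filter_nil; last first.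
    by apply: sub_all C4 => x /andP[_ xb]; rewrite negb_and -ltnNge; apply/orP; left; apply: leq_trans tb'.
  by rewrite cat0s -E1 E4.
- move=> t t'; rewrite inE => /orP[/eqP [_ ->]|Hz].
    by rewrite -C1 mem_cat inE eqxx orbT.
  by rewrite -C1 mem_cat -E1 (E5 _ _ Hz) orbT.
Qed.

Lemma foldl_maxn_bnd (a s : nat) (l : seq nat) : (a < s)%N -> all (fun x => x < s)%N l ->
  (a <= foldl maxn a l < s)%N.
Proof.
elim: l a => [|y l IH] a /= as0; first by rewrite leqnn as0.
move=> /andP[ys /IH H]; have := H (maxn a y); rewrite gtn_max as0 ys => /(_ isT).
by move=> /andP[h1 h2]; rewrite h2 andbT; apply: leq_trans h1; rewrite leq_maxl.
Qed.

Lemma ls_gap g (Y : seq nat) x s : path ltn x Y -> path (Rg g) x Y -> (x < s)%N ->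
  s \notin Y -> (s < last x Y)%N ->
  let m := foldl maxn x [seq y <- Y | (y < s)%N] in
  (m < s /\ s < m + g * 2 ^ logn 2 m)%N.
Proof.
elim: Y x => [|y Y IH] x /=; first by lia.
move=> /andP[xy p1] /andP[Rxy p2] xs; rewrite inE negb_or => /andP[sy sY] sl.
case: (ltngtP y s) => [ys|sy'|e]; last by rewrite e eqxx in sy.
- rewrite /=.
  have -> : maxn x y = y by apply/maxn_idPr; apply: ltnW.
  exact: IH.
- rewrite filter_nil; last first.
    apply: sub_all (order_path_min ltn_trans p1) => z yz; rewrite -leqNgt; lia.
  by split => //=; apply: leq_trans sy' Rxy.
Qed.


Local Open Scope ring_scope.

Lemma chain_sum (R : realType) g kn t' (f : R -> R) :
  (0 < kn)%N -> (2^kn <= g.+1)%N -> (forall x, 0 <= x -> 0 <= f x) ->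
  (forall x y, 0 <= x -> x <= y -> f x <= f y) ->
  forall fuel s, (0 < s)%N -> (s < t')%N -> (t' - s <= fuel)%N ->
  let c := chain g kn t' fuel s in let ts := c ++ [:: t'] in
  \sum_(i < size c) f ((nth 0 ts i.+1 - nth 0 ts i)%N%:R)
    <= \sum_(i < (size c).-1) f ((t' - s)%:R / (2 ^ (i * kn))%:R) + f (t' - s)%:R.
Proof.
move=> kn0 Kg f0 fnd.
have fnd' : forall a b : nat, (a <= b)%N -> f a%:R <= f b%:R.
  by move=> a b ab; apply: fnd; rewrite ?ler_nat.
have pw : forall e : nat, (0 : R) < (2 ^ e)%:R by move=> e; rewrite ltr0n expn_gt0.
elim=> [|fl IH] s s0 st fs; first by lia.
have [P1 P2 P3 P4 P5] := chain_props kn0 Kg s0 st fs.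
move: P1 P2 P3 P4 P5 => /=.
case: ifP => stp /=.
  by move=> *; rewrite big_ord1 big_ord0 add0r /=.
have [h1 h2 h3] := nxt_props kn0 Kg s0.
have h2' : (nxt kn s - s <= g * 2 ^ logn 2 s)%N by lia.
have st' : (nxt kn s < t')%N by move/negbT: stp; rewrite -ltnNge; lia.
have fl' : (t' - nxt kn s <= fl)%N by lia.
have [Q1 _ _ _ _] := chain_props kn0 Kg (ltn_trans s0 h1) st' fl'.
have := IH (nxt kn s) (ltn_trans s0 h1) st' fl'.
set c' := chain g kn t' fl (nxt kn s) in Q1 *.
move=> IHc _ _ _ _ P5.
rewrite big_ord_recl /=.
have e0 : nth 0%N (c' ++ [:: t']) 0 = nxt kn s by rewrite Q1.
rewrite e0.
under eq_bigr => i _ do rewrite /bump /= add1n add0n.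
have := P5; rewrite /= Q1 /=.
move: IHc; rewrite Q1 /=.
set L := size (behead c').
move=> IHc P5'.
have P5'' := P5' isT.
rewrite [in X in _ <= X]big_ord_recr /=.
rewrite [X in _ <= X]addrAC [X in _ <= X]addrC.
apply: lerD.
  have Dp : (0 : R) < (2 ^ (L * kn))%:R by apply: pw.
  apply: fnd; first by rewrite ler0n.
  rewrite ler_pdivlMr // -natrM ler_nat.
  have := leq_mul h2' (leqnn (2 ^ (L * kn))).
  rewrite -mulnA -expnD => H; lia.
apply: le_trans IHc _.
have D'D : (t' - nxt kn s <= t' - s)%N by lia.
apply: lerD; last exact: fnd'.
apply: ler_sum => i _; apply: fnd.
  by apply: divr_ge0; rewrite ler0n.
by rewrite ler_pM2r ?invr_gt0 ?pw // ler_nat.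
Qed.

Section RealPart.
Local Open Scope classical_set_scope.
Lemma int_lb (R : realType) (F : R -> R) (Lr : R) (m : nat) :
  (forall x, 0 <= F x) -> (forall x y, x <= y -> F y <= F x) -> m%:R <= Lr ->
  ((\sum_(i < m) F i.+1%:R)%:E <= \int[lebesgue_measure]_(x in `[0%R, Lr]) (F x)%:E)%E.
Proof.
move=> F0 Fni mL.
have mF : forall D : set R, measurable D -> measurable_fun D (fun x => (F x)%:E).
  by move=> D mD; apply/measurable_EFinP; apply: nonincreasing_measurable => // x y; apply: Fni.
have A : forall m : nat, ((\sum_(i < m) F i.+1%:R)%:E <= \int[lebesgue_measure]_(x in `[0%R, m%:R]) (F x)%:E)%E.
  elim=> [|j IH].
    by rewrite big_ord0; apply: integral_ge0 => x _; rewrite lee_fin.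
  rewrite big_ord_recr /= EFinD.
  rewrite (@itv_bndbnd_setU _ _ _ (BRight j%:R)); last 2 first.
  - by rewrite bnd_simp.
  - by rewrite bnd_simp ler_nat.
  rewrite ge0_integral_setU //; first last.
  - apply/disj_setPS => x [] /=; rewrite !in_itv /= => /andP[_ h1] /andP[h2 _].
    by have := lt_le_trans h2 h1; rewrite ltxx.
  - by move=> x _; rewrite lee_fin.
  - have hm : measurable (`[0%R, j%:R] `|` `]j%:R, j.+1%:R] : set R).
      by apply: measurableU; apply: measurable_itv.
    exact: (mF _ hm).
  apply: leeD => //.
  have H := @ge0_le_integral _ _ R lebesgue_measure `]j%:R, j.+1%:R] (measurable_itv _)
     (cst (F j.+1%:R)%:E) (fun x => (F x)%:E).
  apply: le_trans (H _ _ _ _).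
  - rewrite integral_cst //.
    have := @lebesgue_measure_itv R (Interval (BRight j%:R) (BRight j.+1%:R)); rewrite /= lte_fin ltr_nat ltnSn => ->.
    by rewrite -EFinB -natrB // subSnn mule1.
  - by move=> x _; rewrite lee_fin.
  - exact: measurable_cst.
  - by apply: mF; apply: measurable_itv.
  - move=> x; rewrite /= in_itv /= => /andP[_ h]; rewrite lee_fin; exact: Fni.
apply: le_trans (A m) _.
apply: (@ge0_subset_integral _ _ R lebesgue_measure _ _ (measurable_itv _) (measurable_itv _)).
- exact: (mF _ (measurable_itv _)).
- by move=> x _; rewrite lee_fin.
- by apply: subitvPr; rewrite bnd_simp.
Qed.


Lemma ln2_gt0 (R : realType) : 0 < ln (2 : R).
Proof. by apply: ln_gt0; rewrite ltr1n. Qed.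

Lemma le_log2 (R : realType) (x : R) (j : nat) : 0 < x ->
  (j%:R <= log2 x) = ((2 ^ j)%:R <= x).
Proof.
move=> x0; rewrite /log2 ler_pdivlMr ?ln2_gt0 // mulr_natl -lnXn // natrX.
by rewrite ler_ln // posrE exprn_gt0.
Qed.

Lemma lt_log2 (R : realType) (x : R) (j : nat) : 0 < x ->
  (j%:R < log2 x) = ((2 ^ j)%:R < x).
Proof.
move=> x0; rewrite /log2 ltr_pdivlMr ?ln2_gt0 // mulr_natl -lnXn // natrX.
by rewrite ltr_ln // posrE exprn_gt0.
Qed.

Lemma floor_log2 (R : realType) (g : nat) : (0 < g)%N ->
  Num.floor (log2 (g.+1)%:R : R) = (trunc_log 2 g.+1)%:Z.
Proof.
move=> g0; apply: floor_def.
have h1 := @trunc_logP 2 g.+1 isT isT.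
have h2 := @trunc_log_ltn 2 g.+1 isT.
have -> : ((trunc_log 2 g.+1)%:Z + 1 = (trunc_log 2 g.+1).+1%:Z)%R by rewrite -[in RHS]addn1 PoszD.
rewrite !pmulrn le_log2 ?ltr0n // ler_nat h1 /=.
by rewrite ltNge le_log2 ?ltr0n // ler_nat -ltnNge.
Qed.

Lemma count_bnd (R : realType) (L D kn : nat) : (0 < L)%N -> (0 < D)%N -> (0 < kn)%N ->
  ((1 < L)%N -> (2 ^ (L.-2 * kn) < D)%N) ->
  (L%:Z <= Num.ceil (log2 (D%:R : R) / kn%:R) + 1)%R.
Proof.
move=> L0 D0 k0 H.
have kr : (0 : R) < kn%:R by rewrite ltr0n.
case: L L0 H => [|[|j]] // _ H.
  have : (0 <= Num.ceil (log2 (D%:R : R) / kn%:R))%R.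
    rewrite ceil_ge0; apply: lt_le_trans (_ : -1 < 0) _; first by rewrite oppr_lt0.
    apply: divr_ge0; last exact: ltW.
    by apply: divr_ge0; [apply: ln_ge0; rewrite ler1n | apply: ltW; apply: ln2_gt0].
  lia.
have := H isT; rewrite -(ltr_nat R) -lt_log2 ?ltr0n // natrM -ltr_pdivlMr //.
rewrite -[(j%:R : R)]/((Posz j)%:~R) -ceil_gt_int.
move=> h; rewrite -[j.+2]addn1 PoszD lerD2r -[j.+1]addn1 PoszD lezD1 //.
Qed.

End RealPart.

Lemma zip_lt (rest : seq nat) b t t' : path ltn b rest ->
  (t, t') \in zip (b :: rest) rest -> (t < t')%N.
Proof.
elim: rest b => [|y r IH] b //= /andP[hb p]; rewrite inE => /orP[/eqP [-> ->] //|].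
exact: IH.
Qed.

Lemma w_pos (R : realType) (g n : nat) (p : nat -> nat -> R) (Th : seq nat) :
  (forall t' t : nat, (1 <= t' < t)%N -> 0 < p t t' < 1) ->
  path ltn 1%N (Th ++ [:: n.+1]) -> path (Rg g) 1%N (Th ++ [:: n.+1]) ->
  0 < w (phat g p) n Th.
Proof.
move=> pH P1 P2; rewrite /w big_seq; apply: prodr_gt0 => s.
rewrite mem_index_iota => /andP[s2 sn].
have [m1 ms] := andP (foldl_maxn_bnd s2 (filter_all (fun x => x < s)%N Th)).
rewrite -/(last_switch Th s) in m1 ms.
have /andP[p0 p1] := pH (last_switch Th s) s ltac:(lia).
case: ifP => sT.
  by rewrite /phat; case: (h _ _ _); rewrite /= ?mul1r ?mul0r; lra.
have sY : s \notin Th ++ [:: n.+1].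
  by rewrite mem_cat sT inE /=; apply/eqP; lia.
have := ls_gap P1 P2 s2 sY; rewrite last_cat /= => /(_ sn); rewrite filter_cat /=.
have -> : (n.+1 < s)%N = false by apply/negbTE; rewrite -leqNgt ltnW.
rewrite cats0.
rewrite -/(last_switch Th s) => -[_ hh].
have hT : h g s (last_switch Th s) = true by rewrite /h /= hh andbT ltnW.
by rewrite /phat hT /= mul1r; lra.
Qed.

Lemma lt_log2_div (R : realType) (j kn D : nat) : (0 < kn)%N -> (0 < D)%N ->
  (2 ^ (j * kn) < D)%N -> (j%:R : R) < log2 (D%:R : R) / kn%:R.
Proof.
move=> k0 D0 H; have kr : (0 : R) < kn%:R by rewrite ltr0n.
by rewrite ltr_pdivlMr // -natrM lt_log2 ?ltr0n // ltr_nat.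
Qed.

Unset Implicit Arguments. Set Strict Implicit.

Theorem lemma3 (R : realType) (g n : nat) (p : nat -> nat -> R) :
  (1 <= g)%N -> (1 <= n)%N ->
  (forall t' t : nat, (1 <= t' < t)%N -> 0 < p t t' < 1) ->
  forall T : seq nat, is_tpath n T ->
  exists Th : seq nat, is_tpath n Th /\
  forall t t' : nat, (t, t') \in segments n T ->
    let k : R := (Num.floor (log2 (g.+1)%:R : R))%:~R in
    let d : R := (t' - t)%:R in
    let l : int := Num.ceil (log2 d / k) + 1 in
    let ps := pts_in n Th t t' in
    let l' := size ps in
    let ts := ps ++ [:: t'] in
    [/\ 0 < w (phat g p) n Th,
        t \in bnd n Th, t' \in bnd n Th,
        (size ps)%:Z <= l &
      l'%:Z <= l /\
      forall f : R -> R,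
        (forall x, 0 <= x -> 0 <= f x) ->
        (forall x y, 0 <= x -> x <= y -> f x <= f y) ->
        \sum_(i < l') f ((nth 0 ts i.+1 - nth 0 ts i)%N%:R)
          <= \sum_(i < l'.-1) f (d / 2 `^ (i%:R * k)) + f d
        /\
        ((\sum_(i < l'.-1) f (d / 2 `^ (i%:R * k)) + f d)%:E
          <= (\int[lebesgue_measure]_(x in `[0%R, (log2 d / k)%R]%classic)
                (f (d / 2 `^ (x * k))%R)%:E)
             + (2 * f d)%R%:E)%E ].
Proof.
move=> g1 n1 pH T /andP[sT aT].
set kn := trunc_log 2 g.+1.
have Kg : (2 ^ kn <= g.+1)%N by apply: trunc_logP.
have kn0 : (0 < kn)%N.
  have := @trunc_log_ltn 2 g.+1 isT; rewrite -/kn.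
  case: (kn) => // /=; rewrite expn1; lia.
set rest := T ++ [:: n.+1].
have Pr : path ltn 1%N rest.
  rewrite /rest cat_path; apply/andP; split.
    by rewrite (path_sortedE ltn_trans) sT andbT; apply: sub_all aT => x /andP[].
  rewrite /= andbT; have := mem_last 1%N T; rewrite inE => /orP[/eqP -> //|].
  by move/(allP aT) => /andP[_ h1]; rewrite ltnS.
have lastr : last 1%N rest = n.+1 by rewrite /rest last_cat.
have [Y' [E1 E2 E3 E4 E5]] := build_props kn0 Kg (isT : (0 < 1)%N) Pr.
rewrite lastr in E1 E2 E3 E4 E5.
set B := build g kn (1%N :: rest) in E1 E4 E5.
exists (behead B).
have HB : bnd n (behead B) = B ++ [:: n.+1].
  rewrite /bnd; case EB : B E1 => [|x r] /=.
    by move=> [n0 _]; rewrite n0 in n1.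
  by move=> [->].
have EY : Y' = behead B ++ [:: n.+1].
  move: E1; rewrite -HB /bnd => -[].
  by move=> ->.
rewrite EY in E2 E3.
have wp := w_pos pH E2 E3.
split.
  move: E2; rewrite (path_sortedE ltn_trans) => /andP[a1 s1].
  move: s1; rewrite (sorted_pairwise ltn_trans) pairwise_cat /= andbT => /andP[ar pw].
  rewrite /is_tpath (sorted_pairwise ltn_trans) pw /=.
  move: a1; rewrite all_cat => /andP[a1 _].
  move: ar; rewrite allrel1r => ar.
  apply/allP => x xT; rewrite (allP a1 x xT) /=.
  by have := allP ar x xT; rewrite ltnS.
move=> t t' Hseg; cbv zeta.
have Hz : (t, t') \in zip (1%N :: rest) rest by exact: Hseg.
have tt' := zip_lt Pr Hz.
have t0 : (0 < t)%N.
  have [ht _] := in_zip2 Hz; move: ht; rewrite inE => /orP[/eqP -> //|].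
  by move/(allP (order_path_min ltn_trans Pr)) => /ltnW.
have Eps : pts_in n (behead B) t t' = chain g kn t' t' t by rewrite /pts_in HB E4.
rewrite Eps.
have [C1 C2 C3 C4 C5] := chain_props kn0 Kg t0 tt' (leq_subr _ _).
set c := chain g kn t' t' t in C1 C2 C3 C4 C5 *.
have kE : ((Num.floor (log2 (g.+1)%:R : R))%:~R : R) = kn%:R by rewrite floor_log2.
rewrite kE.
have D0 : (0 < t' - t)%N by rewrite subn_gt0.
have sc0 : (0 < size c)%N by rewrite C1.
have Hcnt : (1 < size c)%N -> (2 ^ ((size c).-2 * kn) < t' - t)%N.
  move=> /C5 H; apply: leq_ltn_trans H.
  apply: leq_trans (leq_pmull _ g1); rewrite leq_exp2l //; lia.
have cnt := count_bnd R sc0 D0 kn0 Hcnt.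
have tin : t \in bnd n (behead B).
  have Ht : t \in c by rewrite C1 mem_head.
  by move: Ht; rewrite HB /c -(E4 _ _ Hz) mem_filter => /andP[_ ->].
split => //.
  by rewrite HB; exact: E5 Hz.
split => // f f0 fnd.
have pwE : forall i : nat, (2 : R) `^ (i%:R * kn%:R) = (2 ^ (i * kn))%:R.
  by move=> i; rewrite -natrM powR_mulrn // natrX.
have Esum : \sum_(i < (size c).-1) f ((t' - t)%:R / 2 `^ (i%:R * kn%:R))
   = \sum_(i < (size c).-1) f ((t' - t)%:R / (2 ^ (i * kn))%:R).
  by apply: eq_bigr => i _; rewrite pwE.
split; first by rewrite Esum; exact: (chain_sum kn0 Kg f0 fnd t0 tt' (leq_subr _ _)).
have dp : (0 : R) < (t' - t)%:R by rewrite ltr0n.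
set d : R := (t' - t)%:R in dp *.
have kr : (0 : R) <= kn%:R by rewrite ler0n.
pose F := fun x : R => f (d / 2 `^ (x * kn%:R)).
have F0 : forall x, 0 <= F x.
  by move=> x; apply: f0; apply: divr_ge0; [exact: ltW | exact: powR_ge0].
have Fni : forall x y, x <= y -> F y <= F x.
  move=> x y xy; apply: fnd.
    by apply: divr_ge0; [exact: ltW | exact: powR_ge0].
  rewrite ler_pM2l // lef_pV2 ?posrE ?powR_gt0 //.
  by apply: ler_powR; [rewrite ler1n | exact: ler_wpM2r].
have int0 : (0 <= \int[lebesgue_measure]_(x in `[0%R, (log2 d / kn%:R)%R]) (F x)%:E)%E.
  by apply: integral_ge0 => x _; rewrite lee_fin.
have fd0 : 0 <= f d by apply: f0; exact: ltW.
case: (size c) Hcnt => [|[|j]] Hcnt /=.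
- rewrite big_ord0 add0r addeC; apply: le_trans (leeDl _ int0).
  by rewrite lee_fin; lra.
- rewrite big_ord0 add0r addeC; apply: le_trans (leeDl _ int0).
  by rewrite lee_fin; lra.
have jle : (j%:R : R) <= log2 d / kn%:R.
  by apply: ltW; apply: lt_log2_div => //; exact: Hcnt.
have IL := int_lb F0 Fni jle.
rewrite big_ord_recl /=.
rewrite (_ : ((0%N)%:R : R) = 0) // mul0r powRr0 divr1.
have -> : f d + \sum_(i < j) f (d / 2 `^ ((bump 0 i)%:R * kn%:R)) + f d
   = \sum_(i < j) F i.+1%:R + 2 * f d.
  rewrite /F; under eq_bigr => i _ do rewrite /bump /= add1n. lra.
by rewrite EFinD; apply: leeD.
Qed.
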